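(* Let $\Omega$ be a Cantor group with identity $e$ and let $T$ be a minimal translation of $\Omega$. For $f\in C(\Omega,\mathbb{R})$ let $F(\omega)=(f(T^n(\omega)))_{n\in\mathbb{Z}}\in\ell^\infty(\mathbb{Z})$. Then for every $f\in C(\Omega,\mathbb{R})$, $\mathrm{hull}(F(e))$ is (isomorphic as a topological group to) a quotient group of $\Omega$ by a closed subgroup.
   Context: A Cantor group is a totally disconnected compact abelian topological group without isolated points. A translation of a topological group $\Omega$ is a map $T(\omega)=\omega\cdot\omega_0$ for some fixed $\omega_0\in\Omega$; it is minimal if $\{T^n(\omega):n\in\mathbb{Z}\}$ is dense in $\Omega$ for every $\omega$. $\sigma$ is the left shift on $\ell^\infty(\mathbb{Z})$ (sup norm), $(\sigma d)_n=d_{n+1}$, and $\mathrm{hull}(d)$ is the closure of $\{\sigma^k d:k\in\mathbb{Z}\}$. In this setting $F(e)$ is limit-periodic (a uniform limit of periodic sequences), and for a limit-periodic $d$, $\mathrm{hull}(d)$ carries a unique topological group structure with identity $d$ such that $k\mapsto\sigma^k(d)$ is a homomorphism; this is the group structure on $\mathrm{hull}(F(e))$. *)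

(* Defs.v *)
From HB Require Import structures.
From mathcomp Require Import all_boot all_order all_algebra.
From mathcomp Require Import all_classical all_reals all_analysis.
Set Implicit Arguments. Unset Strict Implicit. Unset Printing Implicit Defensive.
Import Order.TTheory GRing.Theory Num.Theory.
Local Open Scope classical_set_scope.
Local Open Scope ring_scope.

(* A Cantor group: totally disconnected compact abelian topological group
   without isolated points.  The abelian group is written additively
   (topologicalZmodType = topological abelian group). *)
Definition cantor_group (O : topologicalZmodType) : Prop :=
  [/\ compact [set: O], totally_disconnected [set: O]
    & forall x : O, ~ isolated [set: O] x].

Definition transl_pow (O : zmodType) (w0 : O) (n : int) (w : O) : O :=
  w + w0 *~ n.

Definition minimal_translation (O : topologicalZmodType) (w0 : O) : Prop :=
  forall w : O, closure (range (fun n : int => transl_pow w0 n w)) = [set: O].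

Definition orbit_seq (O : zmodType) (R : realType) (f : O -> R) (w0 : O)
  (w : O) : int -> R := fun n => f (transl_pow w0 n w).

Definition lshift (R : realType) (k : int) (d : int -> R) : int -> R :=
  fun n => d (n + k).

Definition linf_close (R : realType) (x y : int -> R) (eps : R) : Prop :=
  forall n, `|x n - y n| <= eps.

Definition linf_bounded (R : realType) (x : int -> R) : Prop :=
  exists M : R, forall n, `|x n| <= M.

(* hull(d): closure in l^infty(Z) (sup norm) of {sigma^k d : k in Z} *)
Definition hull (R : realType) (d : int -> R) : set (int -> R) :=
  [set x | linf_bounded x /\
     forall eps : R, 0 < eps -> exists k : int, linf_close x (lshift k d) eps].

Definition hull_open (R : realType) (d : int -> R) (U : set (int -> R)) : Prop :=
  U `<=` hull d /\
  forall x, U x -> exists2 eps : R, 0 < eps &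
     forall y, hull d y -> linf_close x y eps -> U y.

(* (op, inv) is a topological group structure on hull(d) with identity d
   such that k |-> sigma^k d is a homomorphism (Z,+) -> hull(d). *)
Definition hull_group_structure (R : realType) (d : int -> R)
  (op : (int -> R) -> (int -> R) -> (int -> R)) (inv : (int -> R) -> (int -> R))
  : Prop :=
  [/\ (forall x y, hull d x -> hull d y -> hull d (op x y)),
      (forall x, hull d x -> hull d (inv x)),
      (forall x y z, hull d x -> hull d y -> hull d z ->
          op x (op y z) = op (op x y) z),
      (forall x, hull d x -> op d x = x /\ op x d = x) &
      (forall x, hull d x -> op (inv x) x = d /\ op x (inv x) = d)] /\
  [/\
      (forall x y eps, hull d x -> hull d y -> 0 < eps ->
          exists2 del : R, 0 < del & forall x' y', hull d x' -> hull d y' ->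
            linf_close x x' del -> linf_close y y' del ->
            linf_close (op x y) (op x' y') eps),
      (forall x eps, hull d x -> 0 < eps ->
          exists2 del : R, 0 < del & forall x', hull d x' ->
            linf_close x x' del -> linf_close (inv x) (inv x') eps) &
      (forall j k : int, op (lshift j d) (lshift k d) = lshift (j + k) d)].

(* Main.v *)
Require Import Defs.
From HB Require Import structures.
From mathcomp Require Import all_boot all_order all_algebra.
From mathcomp Require Import all_classical all_reals all_analysis.
From Stdlib Require Import Classical_Prop.
Import Order.TTheory GRing.Theory Num.Theory numFieldTopology.Exports numFieldNormedType.Exports.
Local Open Scope classical_set_scope.
Local Open Scope ring_scope.

Section S.
Variables (R : realType) (O : topologicalZmodType).

Lemma nbhs_tr0 (b : O) (V : set O) : nbhs 0 V -> nbhs b (fun c => V (c - b)).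
Proof.
move=> HV.
have cb : (fun c : O => c - b) @ b --> b - b.
  apply: (@continuous_comp _ _ _ (fun c => (c, b)) (fun x : O * O => x.1 - x.2)).
    by apply: cvg_pair; [exact: cvg_id | exact: cvg_cst].
  exact: sub_continuous.
by rewrite subrr in cb; apply: cb.
Qed.

Lemma nbhs_trb (b : O) (B : set O) : nbhs b B -> nbhs 0 (fun v => B (b + v)).
Proof.
move=> HB.
have cb : (fun c : O => b + c) @ 0 --> b + 0.
  apply: (@continuous_comp _ _ _ (fun c => (b, c)) (fun x : O * O => x.1 + x.2)).
    by apply: cvg_pair; [exact: cvg_cst | exact: cvg_id].
  exact: add_continuous.
by rewrite addr0 in cb; apply: cb.
Qed.

Lemma fip_cpt (P : R -> set O) : compact [set: O] ->
  (forall e, 0 < e -> P e !=set0) ->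
  (forall e1 e2, 0 < e1 -> e1 <= e2 -> P e1 `<=` P e2) ->
  exists b, forall e, 0 < e -> closure (P e) b.
Proof.
move=> cpt ne mono.
pose F := filter_from [set e : R | 0 < e] P.
have FF : ProperFilter F.
  apply: filter_from_proper.
    apply: filter_from_filter; first by exists 1; rewrite /= ltr01.
    move=> i j /= i0 j0; exists (Num.min i j); first by rewrite /= lt_min i0.
    have m0 : 0 < Num.min i j by rewrite lt_min i0.
    move=> x Px; split.
      by apply: (mono _ _ m0 _ _ Px); rewrite ge_min lexx.
    by apply: (mono _ _ m0 _ _ Px); rewrite ge_min lexx orbT.
  by move=> i /ne.
have [b [_ Hb]] := cpt F FF filterT.
exists b => e e0 B nB.
apply: (Hb (P e) B) => //.
by exists e.
Qed.

Lemma unif_f (f : O -> R) : compact [set: O] -> continuous f ->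
  forall e, 0 < e -> \forall v \near (0:O), forall x, `|f (x + v) - f x| < e.
Proof.
move=> cpt fc e e0.
have cov : forall x, [set: O] x -> \forall x' \near x & i \near (nbhs (0:O)), `|f (x' + i) - f x'| < e.
  move=> x _.
  have c1 : (fun p : O * O => f (p.1 + p.2)) @ (nbhs ((x, 0) : O * O)) --> f (x + 0).
    apply: continuous_comp; first exact: add_continuous.
    exact: fc.
  have c2 : (fun p : O * O => f p.1) @ (nbhs ((x, 0) : O * O)) --> f x.
    apply: continuous_comp; first exact: cvg_fst.
    exact: fc.
  rewrite addr0 in c1.
  move/cvgrPdist_lt: c1 => /(_ (e/2)) c1.
  move/cvgrPdist_lt: c2 => /(_ (e/2)) c2.
  have e2 : 0 < e / 2 by rewrite divr_gt0.
  move: (c1 e2) (c2 e2); apply: filterS2 => -[a b] /= h1 h2.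
  rewrite -(subrK (f x) (f (a + b))) -addrA.
  apply: (le_lt_trans (ler_normD _ _)).
  rewrite (splitr e) ltrD //; first by rewrite distrC.
have H := (proj1 (compact_near_coveringP [set: O]) cpt O (nbhs (0:O))
   (fun v x => `|f (x + v) - f x| < e) (nbhs_filter _) cov).
by apply: filterS H => v Hv x; apply: Hv.
Qed.

Lemma nbhs_add (a z : O) (B : set O) : nbhs (a + z) B -> nbhs z (fun t => B (a + t)).
Proof.
move=> HB.
have cb : (fun c : O => a + c) @ z --> a + z.
  apply: (@continuous_comp _ _ _ (fun c => (a, c)) (fun x : O * O => x.1 + x.2)).
    by apply: cvg_pair; [exact: cvg_cst | exact: cvg_id].
  exact: add_continuous.
by apply: cb.
Qed.

Lemma close_eq (u v : R) : (forall e, 0 < e -> `|u - v| <= e) -> u = v.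
Proof.
move=> H; apply/eqP; rewrite -subr_eq0 -normr_le0.
by apply/ler_addgt0Pr => e e0; rewrite add0r; exact: H.
Qed.

Lemma lc_tri (x y z : int -> R) e1 e2 :
  linf_close x y e1 -> linf_close y z e2 -> linf_close x z (e1 + e2).
Proof. by move=> h1 h2 n; apply: (le_trans (ler_distD (y n) _ _)); rewrite lerD. Qed.

Lemma lc_sym (x y : int -> R) e : linf_close x y e -> linf_close y x e.
Proof. by move=> h n; rewrite distrC. Qed.

Lemma lc_le (x y : int -> R) e1 e2 : e1 <= e2 -> linf_close x y e1 -> linf_close x y e2.
Proof. by move=> le h n; apply: le_trans le. Qed.

Lemma lc_eq (x y : int -> R) : (forall e, 0 < e -> linf_close x y e) -> x = y.
Proof. by move=> h; apply: funext => n; apply: close_eq => e e0; apply: h. Qed.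

Lemma lc_refl (x : int -> R) e : 0 <= e -> linf_close x x e.
Proof. by move=> e0 n; rewrite subrr normr0. Qed.

Variables (f : O -> R) (w0 : O).
Hypotheses (cpt : compact [set: O]) (fc : continuous f) (dens : minimal_translation w0).

Local Notation psi := (orbit_seq f w0).
Local Notation d := (orbit_seq f w0 0).

Lemma psi_shift k : psi (w0 *~ k) = Defs.lshift k d.
Proof.
apply: funext => n; rewrite /orbit_seq /Defs.lshift /transl_pow add0r mulrzDr.
by rewrite addrC.
Qed.

Lemma UC e : 0 < e -> exists2 V, nbhs (0:O) V &
  forall c c', V (c' - c) -> linf_close (psi c) (psi c') e.
Proof.
move=> e0; exists (fun v => forall x, `|f (x + v) - f x| < e).
  exact: unif_f.
move=> c c' HV n; rewrite /orbit_seq /transl_pow distrC.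
have -> : c' + w0 *~ n = (c + w0 *~ n) + (c' - c).
  by rewrite addrAC [c + _]addrC subrK.
exact/ltW/HV.
Qed.

Lemma dens' a V : nbhs (0:O) V -> exists k, V (w0 *~ k - a).
Proof.
move=> HV.
have : closure (range (fun n : int => transl_pow w0 n 0)) a by rewrite dens.
move=> /(_ _ (nbhs_tr0 a V HV)) [_ [[k _ <-] Hk]].
by exists k; move: Hk; rewrite /transl_pow add0r.
Qed.

Lemma f_bounded : exists M, forall x, `|f x| <= M.
Proof.
have : compact (f @` [set: O]).
  by apply: continuous_compact => //; exact: continuous_subspaceT.
move=> /compact_bounded [M [_ HM]]; exists (M + 1) => x.
by apply: HM; [rewrite ltrDl | exists x].
Qed.

Lemma psi_hull a : hull d (psi a).
Proof.
split.
  by have [M HM] := f_bounded; exists M => n; apply: HM.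
move=> e e0; have [V HV UV] := UC _ e0.
have [k Hk] := dens' a V HV.
by exists k; rewrite -psi_shift; apply: UV.
Qed.

Lemma psi_lim (P : R -> set O) x b : (forall e, 0 < e -> closure (P e) b) ->
  (forall e c, 0 < e -> P e c -> linf_close x (psi c) e) -> psi b = x.
Proof.
move=> cl hP; apply: lc_eq => e e0.
have e2 : 0 < e / 2 by rewrite divr_gt0.
have [V HV UV] := UC _ e2.
have [c [Pc Vc]] := cl _ e2 _ (nbhs_tr0 b V HV).
rewrite (splitr e); apply: lc_tri (UV _ _ Vc) _.
exact/lc_sym/hP.
Qed.

Lemma psi_surj x : hull d x -> exists a, psi a = x.
Proof.
move=> [_ hx].
pose P e := fun c => exists k, c = w0 *~ k /\ linf_close x (Defs.lshift k d) e.
have [||b Hb] := @fip_cpt P cpt.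
- move=> e e0; have [k hk] := hx e e0; by exists (w0 *~ k), k.
- move=> e1 e2 e10 le c [k [-> hk]]; exists k; split => //; exact: lc_le hk.
exists b; apply: (@psi_lim P x b Hb) => e c e0 [k [-> hk]].
by rewrite psi_shift.
Qed.


Lemma ker_fwd a b : psi a = psi b -> forall y, f (a - b + y) = f y.
Proof.
move=> eab.
have key : forall z, f (a + z) = f (b + z).
  move=> z; apply: close_eq => e e0.
  have e2 : 0 < e / 2 by rewrite divr_gt0.
  have := fc (a + z); move/cvgrPdist_lt => /(_ _ e2) /(nbhs_add a z) ca.
  have := fc (b + z); move/cvgrPdist_lt => /(_ _ e2) /(nbhs_add b z) cb.
  have cl : closure (range (fun n => transl_pow w0 n 0)) z by rewrite dens.
  have [_ [[n _ <-] [h1 h2]]] := cl _ (filterI ca cb).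
  have en : f (a + w0 *~ n) = f (b + w0 *~ n) := congr1 (fun g => g n) eab.
  rewrite /transl_pow add0r in h1 h2.
  rewrite (splitr e); apply: le_trans (ler_distD (f (a + w0 *~ n)) _ _) _.
  rewrite lerD //; first exact: ltW. by rewrite en distrC ltW.
move=> y; rewrite addrAC -addrA key [b + _]addrC subrK //.
Qed.

Lemma ker_bwd a b : (forall y, f (a - b + y) = f y) -> psi a = psi b.
Proof.
move=> h; apply: funext => n; rewrite /orbit_seq /transl_pow.
have -> : a + w0 *~ n = (a - b) + (b + w0 *~ n) by rewrite addrA subrK.
exact: h.
Qed.

Lemma ker_closed : closed [set c | forall y, f (c + y) = f y].
Proof.
move=> c cl y; apply: close_eq => e e0.
have := fc (y + c); move/cvgrPdist_lt => /(_ _ e0) /(nbhs_add y c) ct.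
have [t [Ht h]] := cl _ ct.
by rewrite -(Ht y) [c + y]addrC [t + y]addrC ltW.
Qed.

Lemma psi_hom op inv : hull_group_structure d op inv ->
  forall a b, psi (a + b) = op (psi a) (psi b).
Proof.
move=> [_ [cont _ hk]].
have A : forall j b, psi (w0 *~ j + b) = op (psi (w0 *~ j)) (psi b).
  move=> j b; apply: lc_eq => e e0.
  have e2 : 0 < e / 2 by rewrite divr_gt0.
  have [del del0 Hd] := cont (psi (w0 *~ j)) (psi b) (e/2) (psi_hull _) (psi_hull _) e2.
  have m0 : 0 < Num.min del (e/2) by rewrite lt_min del0.
  have [V HV UV] := UC _ m0.
  have [k Hk] := dens' b V HV.
  have E : psi (w0 *~ j + w0 *~ k) = op (psi (w0 *~ j)) (psi (w0 *~ k)).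
    by rewrite -mulrzDr !psi_shift hk.
  have m1 : Num.min del (e/2) <= e/2 by rewrite ge_min lexx orbT.
  have m2 : Num.min del (e/2) <= del by rewrite ge_min lexx.
  rewrite (splitr e); apply: (@lc_tri _ (psi (w0 *~ j + w0 *~ k))).
    apply: lc_le m1 (UV _ _ _).
    by rewrite [w0 *~ j + w0 *~ k]addrC addrKA.
  rewrite E; apply: lc_sym; apply: Hd; try exact: psi_hull.
    exact/lc_refl/ltW.
  exact: lc_le m2 (UV _ _ Hk).
move=> a b; apply: lc_eq => e e0.
have e2 : 0 < e / 2 by rewrite divr_gt0.
have [del del0 Hd] := cont (psi a) (psi b) (e/2) (psi_hull _) (psi_hull _) e2.
have m0 : 0 < Num.min del (e/2) by rewrite lt_min del0.
have [V HV UV] := UC _ m0.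
have [j Hj] := dens' a V HV.
have m1 : Num.min del (e/2) <= e/2 by rewrite ge_min lexx orbT.
have m2 : Num.min del (e/2) <= del by rewrite ge_min lexx.
rewrite (splitr e); apply: (@lc_tri _ (psi (w0 *~ j + b))).
  apply: lc_le m1 (UV _ _ _).
  by rewrite opprD addrACA subrr addr0.
rewrite A; apply: lc_sym; apply: Hd; try exact: psi_hull.
  exact: lc_le m2 (UV _ _ Hj).
exact/lc_refl/ltW.
Qed.

Lemma psi_open U : U `<=` hull d -> (hull_open d U <-> open (psi @^-1` U)).
Proof.
move=> Uh; split.
  move=> [_ hU]; rewrite openE => a Ua.
  have [e e0 He] := hU _ Ua.
  have [V HV UV] := UC _ e0.
  apply: filterS (nbhs_tr0 a V HV) => c Vc.
  by apply: He; [exact: psi_hull | exact: UV].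
move=> oU; split => // x Ux.
apply: NNPP => Hn.
have Hy : forall e, 0 < e -> exists y, [/\ hull d y, linf_close x y e & ~ U y].
  move=> e e0; apply: NNPP => Hno; apply: Hn; exists e => // y hy cy.
  by apply: NNPP => nUy; apply: Hno; exists y.
pose P e := fun c => ~ U (psi c) /\ linf_close x (psi c) e.
have [||b Hb] := @fip_cpt P cpt.
- move=> e e0; have [y [hy cy nUy]] := Hy e e0.
  by have [c ec] := psi_surj y hy; exists c; rewrite /P ec.
- by move=> e1 e2 e10 le c [h1 h2]; split => //; exact: lc_le h2.
have eb : psi b = x by apply: (@psi_lim P x b Hb) => e c e0 [].
have Ub : (psi @^-1` U) b by rewrite /= eb.
move: oU; rewrite openE => /(_ b Ub) nb.
have [c [[nUc _] Uc]] := Hb 1 ltr01 _ nb.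
exact: nUc Uc.
Qed.

End S.

Theorem lemma4p2 (R : realType) (O : topologicalZmodType) (w0 : O)
  (f : O -> R)
  (op : (int -> R) -> (int -> R) -> (int -> R)) (inv : (int -> R) -> (int -> R)) :
  cantor_group O -> minimal_translation w0 -> continuous f ->
  hull_group_structure (orbit_seq f w0 0) op inv ->
  exists H : set O,
    [/\ closed H, H 0, (forall a b, H a -> H b -> H (a - b)) &
      exists psi : O -> (int -> R),
        [/\ (forall a, hull (orbit_seq f w0 0) (psi a)),
            (forall x, hull (orbit_seq f w0 0) x -> exists a, psi a = x),
            (forall a b, psi (a + b) = op (psi a) (psi b)),
            (forall a b, psi a = psi b <-> H (a - b)) &
            (forall U, U `<=` hull (orbit_seq f w0 0) ->
               (hull_open (orbit_seq f w0 0) U <-> open (psi @^-1` U)))]].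
Proof.
move=> [cpt _ _] dens fc hg.
exists [set c | forall y, f (c + y) = f y]; split.
- exact: ker_closed.
- by move=> y /=; rewrite add0r.
- move=> a b /= Ha Hb y.
  rewrite addrAC -addrA Ha.
  by have := Hb (y - b); rewrite [b + _]addrC subrK => ->.
exists (orbit_seq f w0); split.
- exact: psi_hull.
- exact: psi_surj.
- exact: psi_hom hg.
- move=> a b; split; first exact: ker_fwd.
  exact: ker_bwd.
- move=> U hU; exact: psi_open.
Qed.
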